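(* Let $X$ be a nonempty set, $G\le S_X$, $\Lambda=(\lambda_x\in G:x\in X/G)$, and consider $(X,* )=\mathbf R(G,\Lambda)$. Then: (i) $(X,* )$ is well-defined if and only if $(G,\Lambda)$ is a rack folder, in which case $(X,* )$ is a rack satisfying $L_x=\lambda_x$ for every $x\in X/G$ and $\mathrm{LMlt}(X,* )=\langle\bigcup_{x\in X/G}\lambda_x^G\rangle\le G$; (ii) $(X,* )$ is a well-defined quandle if and only if $(G,\Lambda)$ is a quandle folder.
   Context: Permutations act on the right ($xf$ is the image of $x$ under $f$; $fg$ means $f$ first, then $g$); $g^f=f^{-1}gf$, $f^G=\{f^g:g\in G\}$. For $G\le S_X$, $xG$ is the orbit of $x$, $G_x$ its stabilizer, $X/G$ a fixed complete set of orbit representatives; $C_G(H)$ is the centralizer, $Z(H)$ the center. A left quasigroup is a groupoid $(X,* )$ whose left translations $L_x$ ($yL_x=x*y$) are bijections; a rack is a left quasigroup with $x*(y*z)=(x*y)*(x*z)$; a quandle is a rack with $x*x=x$; $\mathrm{LMlt}(X,* )=\langle L_x:x\in X\rangle$. A pair $(G,(\lambda_x:x\in X/G))$ is a rack folder (resp. quandle folder) if $\lambda_x\in C_G(G_x)$ (resp. $\lambda_x\in Z(G_x)$) for every $x\in X/G$. Given $G\le S_X$ and $\Lambda=(\lambda_x\in G:x\in X/G)$, $\mathbf R(G,\Lambda)=(X,* )$ is the attempted groupoid defined by setting $L_y=(\lambda_x)^{g_y}$ whenever $x\in X/G$, $y\in xG$ and $g_y$ is any element of $G$ with $xg_y=y$;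 it is well-defined if this does not depend on the choice of $g_y$. *)

(* Defs.v *)
From Stdlib Require Import ClassicalEpsilon.

Set Implicit Arguments.

Record perm (X : Type) := Perm {
  pfun : X -> X;
  pinv : X -> X;
  pinvK : forall x, pinv (pfun x) = x;
  pfunK : forall x, pfun (pinv x) = x }.
Arguments Perm {X}.
Arguments pfun {X}.
Arguments pinv {X}.

Section PermOps.
Variable X : Type.

(** Right action: [act x f] is xf, the image of x under f. *)
Definition act (x : X) (f : perm X) : X := pfun f x.

Definition pone : perm X :=
  @Perm X (fun x => x) (fun x => x) (fun x => eq_refl) (fun x => eq_refl).

(** fg means f first, then g. *)
Program Definition pmul (f g : perm X) : perm X :=
  @Perm X (fun x => pfun g (pfun f x)) (fun x => pinv f (pinv g x)) _ _.
Next Obligation. now rewrite pinvK, pinvK. Qed.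
Next Obligation. now rewrite pfunK, pfunK. Qed.

Definition pinvp (f : perm X) : perm X :=
  @Perm X (pinv f) (pfun f) (pfunK f) (pinvK f).

Definition conj (g f : perm X) : perm X := pmul (pmul (pinvp f) g) f.

Definition is_subgroup (G : perm X -> Prop) : Prop :=
  G pone /\ (forall f g, G f -> G g -> G (pmul f g)) /\
  (forall f, G f -> G (pinvp f)).

Definition gen (S : perm X -> Prop) (h : perm X) : Prop :=
  forall H, is_subgroup H -> (forall s, S s -> H s) -> H h.

Definition orbit (G : perm X -> Prop) (x y : X) : Prop :=
  exists g, G g /\ act x g = y.

Definition stab (G : perm X -> Prop) (x : X) (g : perm X) : Prop :=
  G g /\ act x g = x.

(** R is a complete set of orbit representatives (X/G) *)
Definition is_transversal (G : perm X -> Prop) (R : X -> Prop) : Prop :=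
  (forall x, exists r, R r /\ orbit G r x) /\
  (forall r s, R r -> R s -> orbit G r s -> r = s).

Definition centralizer (G H : perm X -> Prop) (c : perm X) : Prop :=
  G c /\ forall h, H h -> pmul c h = pmul h c.
Definition center (H : perm X -> Prop) (c : perm X) : Prop :=
  centralizer H H c.

(** Lambda = (lam r : r in R); values of lam outside R are irrelevant. *)
Definition rack_folder (G : perm X -> Prop) (R : X -> Prop) (lam : X -> perm X) :=
  forall r, R r -> centralizer G (stab G r) (lam r).
Definition quandle_folder (G : perm X -> Prop) (R : X -> Prop) (lam : X -> perm X) :=
  forall r, R r -> center (stab G r) (lam r).

(** R(G, Lambda) is well-defined: L_y = (lam x)^(g_y) does not depend on g_y *)
Definition R_well_defined (G : perm X -> Prop) (R : X -> Prop) (lam : X -> perm X) :=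
  forall r y g1 g2, R r -> G g1 -> G g2 -> act r g1 = y -> act r g2 = y ->
    conj (lam r) g1 = conj (lam r) g2.

(** The attempted left translation L_y = (lam x)^(g_y), for some chosen
    representative x of the orbit of y and some g_y in G with x g_y = y. *)
Definition RL (G : perm X -> Prop) (R : X -> Prop) (lam : X -> perm X) (y : X)
  : perm X :=
  let p := epsilon (inhabits (y, pone))
             (fun p : X * perm X => R (fst p) /\ G (snd p) /\ act (fst p) (snd p) = y) in
  conj (lam (fst p)) (snd p).

Definition Rop (G : perm X -> Prop) (R : X -> Prop) (lam : X -> perm X)
  (y z : X) : X := act z (RL G R lam y).

Definition bijective_fun (f : X -> X) : Prop :=
  exists g : X -> X, (forall x, g (f x) = x) /\ (forall x, f (g x) = x).
Definition is_left_quasigroup (op : X -> X -> X) : Prop :=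
  forall x, bijective_fun (op x).
Definition is_rack (op : X -> X -> X) : Prop :=
  is_left_quasigroup op /\
  forall x y z, op x (op y z) = op (op x y) (op x z).
Definition is_quandle (op : X -> X -> X) : Prop :=
  is_rack op /\ forall x, op x x = x.

Definition LMlt (op : X -> X -> X) : perm X -> Prop :=
  gen (fun h => exists x, pfun h = op x).

End PermOps.

(* Main.v *)
Require Import Defs.
From Stdlib Require Import ClassicalEpsilon FunctionalExtensionality ProofIrrelevance.

Lemma perm_ext X (f g : perm X) : (forall x, pfun f x = pfun g x) -> f = g.
Proof.
  intros H. assert (Hf : pfun f = pfun g) by (extensionality x; apply H).
  assert (Hi : pinv f = pinv g).
  { extensionality x. rewrite <- (pfunK g x) at 1. rewrite <- Hf. apply pinvK. }
  destruct f as [f fi a b], g as [g gi c d]; simpl in *. subst.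
  rewrite (proof_irrelevance _ a c), (proof_irrelevance _ b d). reflexivity.
Qed.

Lemma gen_mono X (S1 S2 : perm X -> Prop) h :
  (forall k, S1 k -> S2 k) -> gen S1 h -> gen S2 h.
Proof. intros Hs Hg H HH HS. apply Hg; auto. Qed.

Lemma RL_spec X (G : perm X -> Prop) R lam :
  is_subgroup G -> is_transversal G R -> R_well_defined G R lam ->
  forall r g, R r -> G g -> RL G R lam (act r g) = conj (lam r) g.
Proof.
  intros [G1 [GM GI]] [HT1 HT2] HW r g Rr Gg. unfold RL.
  match goal with |- context [epsilon ?i ?Q] =>
    pose proof (epsilon_spec i Q) as HP end.
  assert (HE : exists p : X * perm X, R (fst p) /\ G (snd p) /\ act (fst p) (snd p) = act r g).
  { exists (r, g). simpl. auto. }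
  specialize (HP HE). clear HE. revert HP.
  destruct (epsilon _ _) as [x g']. simpl. intros [Rx [Gg' Hact]].
  assert (x = r).
  { apply HT2; auto. exists (pmul g' (pinvp g)). split; auto.
    unfold act in *. simpl. rewrite Hact. apply pinvK. }
  subst x. apply (HW r (act r g)); auto.
Qed.

Lemma RL_in_G X (G : perm X -> Prop) R lam :
  is_subgroup G -> is_transversal G R -> R_well_defined G R lam ->
  (forall r, R r -> G (lam r)) -> forall y, G (RL G R lam y).
Proof.
  intros HG HT HW Hl y. pose proof HG as [G1 [GM GI]].
  destruct (proj1 HT y) as [r [Rr [g [Gg Hy]]]]. subst y.
  rewrite RL_spec; auto. unfold conj. auto.
Qed.

Theorem proposition3p3 (X : Type) (G : perm X -> Prop) (R : X -> Prop)
  (lam : X -> perm X) :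
  inhabited X ->
  is_subgroup G ->
  is_transversal G R ->
  (forall r, R r -> G (lam r)) ->
  (* (i) *)
  ((R_well_defined G R lam <-> rack_folder G R lam) /\
   (R_well_defined G R lam ->
      is_rack (Rop G R lam) /\
      (forall r, R r -> Rop G R lam r = pfun (lam r)) /\
      (forall h, LMlt (Rop G R lam) h <->
         gen (fun k => exists r g, R r /\ G g /\ k = conj (lam r) g) h) /\
      (forall h, LMlt (Rop G R lam) h -> G h))) /\
  (* (ii) *)
  ((R_well_defined G R lam /\ is_quandle (Rop G R lam)) <-> quandle_folder G R lam).
Proof.
  intros _ HG HT Hl. pose proof HG as [G1 [GM GI]].
  assert (WR : R_well_defined G R lam <-> rack_folder G R lam).
  { split.
    - intros HW r Rr. split; auto. intros h [Gh Hh].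
      pose proof (HW r r h (pone X) Rr Gh G1 Hh eq_refl) as E.
      apply perm_ext. intros x.
      assert (E' := f_equal (fun p => pfun p (pfun h x)) E). cbn in E'.
      rewrite pinvK in E'. cbn. exact E'.
    - intros HF r y g1 g2 Rr Gg1 Gg2 H1 H2.
      assert (Hs : stab G r (pmul g1 (pinvp g2))).
      { split; auto. unfold act in *. cbn. rewrite H1, <- H2. apply pinvK. }
      destruct (HF r Rr) as [_ Hc]. specialize (Hc _ Hs).
      apply perm_ext. intros x. cbn.
      assert (E := f_equal (fun p => pfun p (pinv g1 x)) Hc). cbn in E.
      rewrite pfunK in E. rewrite <- E. rewrite pfunK. reflexivity. }

  assert (Rrack : R_well_defined G R lam ->
      is_rack (Rop G R lam) /\
      (forall r, R r -> Rop G R lam r = pfun (lam r)) /\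
      (forall h, LMlt (Rop G R lam) h <->
         gen (fun k => exists r g, R r /\ G g /\ k = conj (lam r) g) h) /\
      (forall h, LMlt (Rop G R lam) h -> G h)).
  { intros HW.
    assert (Hsp := RL_spec _ _ _ _ HG HT HW).
    assert (HinG := RL_in_G _ _ _ _ HG HT HW Hl).
    assert (S12 : forall k, (exists x, pfun k = Rop G R lam x) ->
                  exists r g, R r /\ G g /\ k = conj (lam r) g).
    { intros k [x Hx]. destruct (proj1 HT x) as [r [Rr [g [Gg Hy]]]]. subst x.
      exists r, g. split; [auto|split; [auto|]].
      rewrite <- Hsp by auto. apply perm_ext. intros z.
      rewrite Hx. reflexivity. }
    split; [|split; [|split]].
    - split.
      + intros x. exists (pinv (RL G R lam x)). split; intros z; unfold Rop, act.
        * apply pinvK.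
        * apply pfunK.
      + intros x y z. destruct (proj1 HT y) as [r [Rr [g [Gg Hy]]]]. subst y.
        assert (Ex : Rop G R lam x (act r g) = act r (pmul g (RL G R lam x))) by reflexivity.
        rewrite Ex.
        unfold Rop. rewrite (Hsp r (pmul g (RL G R lam x))) by auto.
        rewrite (Hsp r g) by auto.
        generalize (RL G R lam x) as L. intros L.
        unfold act, conj. cbn. rewrite pinvK. reflexivity.
    - intros r Rr. extensionality z. unfold Rop.
      assert (H := Hsp r (pone X) Rr G1). change (act r (pone X)) with r in H.
      rewrite H. reflexivity.
    - intros h. split; apply gen_mono.
      + exact S12.
      + intros k [r [g [Rr [Gg Hk]]]]. exists (act r g). subst k.
        extensionality z. unfold Rop. rewrite Hsp; auto.
    - intros h Hh. apply Hh; auto. intros k Hk.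
      destruct (S12 k Hk) as [r [g [Rr [Gg Hk']]]]. subst k.
      unfold conj. auto. }
  split; [split; auto|].
  split.
  - intros [HW [Hrack Hid]] r Rr. split.
    + split; auto. destruct (Rrack HW) as [_ [Hr _]].
      specialize (Hid r). rewrite (Hr r Rr) in Hid. exact Hid.
    + apply (proj1 WR HW r Rr).
  - intros HQ.
    assert (HF : rack_folder G R lam).
    { intros r Rr. destruct (HQ r Rr) as [[Gl _] Hc]. split; auto. }
    assert (HW := proj2 WR HF).
    split; auto. split; [apply (Rrack HW)|].
    intros x. destruct (proj1 HT x) as [r [Rr [g [Gg Hy]]]]. subst x.
    unfold Rop. rewrite (RL_spec _ _ _ _ HG HT HW); auto.
    destruct (HQ r Rr) as [[_ Hfix] _].
    unfold act, conj in *. cbn. rewrite pinvK. rewrite Hfix. reflexivity.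
Qed.
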